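(* The floor function is not definable in $Q_0(\mathbf s)$: there is no $\Sigma_{ms}$-term $t(x)$ with only variable $x$ such that $t(q)=\lfloor q\rfloor$ for all rationals $q$ (evaluated in $Q_0(\mathbf s)$), where $\lfloor q\rfloor=\max\{n\in\mathbb Z\mid n\le q\}$.
   Context: $\Sigma_m=(0,1,+,\cdot,-,{}^{-1})$ and $\Sigma_{ms}=\Sigma_m$ extended with a unary symbol $\mathbf s$. $Q_0$ is the field of rational numbers with the total inverse $q^{-1}=1/q$ for $q\neq0$, $0^{-1}=0$. $Q_0(\mathbf s)$ is $Q_0$ expanded with the sign function $\mathbf s(q)=-1$ if $q<0$, $0$ if $q=0$, $1$ if $q>0$. *)

(* Defs.v *)
From mathcomp Require Import all_boot all_order all_algebra.
Set Implicit Arguments. Unset Strict Implicit. Unset Printing Implicit Defensive.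
Import Order.TTheory GRing.Theory Num.Theory.
Local Open Scope ring_scope.

Inductive msterm : Type :=
| TVar : msterm
| TZero : msterm
| TOne : msterm
| TAdd : msterm -> msterm -> msterm
| TMul : msterm -> msterm -> msterm
| TOpp : msterm -> msterm
| TInv : msterm -> msterm
| TSgn : msterm -> msterm.

Definition inv0 (q : rat) : rat := if q == 0 then 0 else q^-1.

Definition sgn (q : rat) : rat := if q < 0 then -1 else if q == 0 then 0 else 1.

Fixpoint eval_ms (t : msterm) (q : rat) : rat :=
  match t with
  | TVar => q
  | TZero => 0
  | TOne => 1
  | TAdd a b => eval_ms a q + eval_ms b q
  | TMul a b => eval_ms a q * eval_ms b q
  | TOpp a => - eval_ms a q
  | TInv a => inv0 (eval_ms a q)
  | TSgn a => sgn (eval_ms a q)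
  end.

Definition is_floor (q r : rat) : Prop :=
  exists z : int, r = z%:~R /\ z%:~R <= q /\ forall n : int, n%:~R <= q -> n <= z.

(* Main.v *)
Require Import Defs.
From mathcomp Require Import all_boot all_order all_algebra.
Import Order.TTheory GRing.Theory Num.Theory.
Local Open Scope ring_scope.

Lemma maxP (a b q : rat) : Num.max a b < q -> a < q /\ b < q.
Proof. by rewrite gt_max => /andP. Qed.

Lemma lc_mulXC (p : {poly rat}) c : p != 0 -> lead_coef (p * 'X + c%:P) = lead_coef p.
Proof.
move=> p0; rewrite lead_coefDl ?lead_coefMX //.
rewrite size_mulX // (leq_ltn_trans (size_polyC_leq1 c)) //.
by rewrite ltnS lt0n size_poly_eq0.
Qed.

Lemma pos_event (P : {poly rat}) : 0 < lead_coef P ->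
  exists M eps, 0 < eps /\ forall q, M < q -> eps <= P.[q].
Proof.
elim/poly_ind: P => [|p c IH]; first by rewrite lead_coef0 ltxx.
have [->|p0] := eqVneq p 0.
  rewrite mul0r add0r lead_coefC => c0; exists 0, c; split=> // q _.
  by rewrite hornerC.
rewrite lc_mulXC // => /IH [M [e [e0 H]]].
exists (Num.max M (Num.max 0 (1 - c / e))), e; split=> // q /maxP [/H Hq /maxP [q0 qc]].
rewrite hornerMXaddC.
have h1 : e * q <= p.[q] * q by rewrite ler_wpM2r // ltW.
have h2 : e - c < e * q.
  move: qc; rewrite -(ltr_pM2l e0) mulrBr mulr1 mulrCA divff ?mulr1 //.
  by rewrite gt_eqF.
by rewrite -lerBlDr; apply: (le_trans _ h1); rewrite ltW.
Qed.

Lemma sg_event (P : {poly rat}) : P != 0 ->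
  exists M, forall q, M < q -> Num.sg P.[q] = Num.sg (lead_coef P).
Proof.
move=> P0; have lc0 : lead_coef P != 0 by rewrite lead_coef_eq0.
case: (ltrgt0P (lead_coef P)) lc0 => // [lp|ln] _.
  have [M [e [e0 H]]] := pos_event _ lp; exists M => q /H Hq.
  by rewrite (gtr0_sg lp) gtr0_sg // (lt_le_trans e0).
have : 0 < lead_coef (- P) by rewrite lead_coefN oppr_gt0.
move=> /pos_event [M [e [e0 H]]]; exists M => q /H.
rewrite hornerN lerNr => Hq.
by rewrite (ltr0_sg ln) ltr0_sg // (le_lt_trans Hq) // oppr_lt0.
Qed.

Definition ER (f : rat -> rat) := exists M (P Q : {poly rat}),
  forall q, M < q -> Q.[q] != 0 /\ f q = P.[q] / Q.[q].

Lemma inv0E (q : rat) : Defs.inv0 q = q^-1.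
Proof. by rewrite /Defs.inv0; case: eqP => [->|]; rewrite ?invr0. Qed.

Lemma sgnE (q : rat) : Defs.sgn q = Num.sg q.
Proof.
rewrite /Defs.sgn; case: (ltrgt0P q) => [h|h|->]; rewrite ?sgr0 //.
- by rewrite gtr0_sg // gt_eqF.
- by rewrite ltr0_sg.
Qed.

Lemma ER_const (f : rat -> rat) M c : (forall q, M < q -> f q = c) -> ER f.
Proof.
move=> H; exists M, c%:P, 1 => q /H ->; rewrite !hornerC divr1; split=> //.
Qed.

Lemma ER_eval t : ER (eval_ms t).
Proof.
elim: t => /=.
- by exists 0, 'X, 1 => q _; rewrite hornerX hornerC divr1 oner_neq0.
- exact: (@ER_const _ 0 0).
- exact: (@ER_const _ 0 1).
- move=> a [M1 [P1 [Q1 H1]]] b [M2 [P2 [Q2 H2]]].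
  exists (Num.max M1 M2), (P1 * Q2 + P2 * Q1), (Q1 * Q2) => q /maxP [/H1 [n1 ->] /H2 [n2 ->]].
  by rewrite hornerD !hornerM mulf_neq0 // addf_div.
- move=> a [M1 [P1 [Q1 H1]]] b [M2 [P2 [Q2 H2]]].
  exists (Num.max M1 M2), (P1 * P2), (Q1 * Q2) => q /maxP [/H1 [n1 ->] /H2 [n2 ->]].
  by rewrite !hornerM mulf_neq0 // mulf_div.
- move=> a [M1 [P1 [Q1 H1]]]; exists M1, (- P1), Q1 => q /H1 [n1 ->].
  by rewrite hornerN mulNr.
- move=> a [M1 [P1 [Q1 H1]]].
  have [P0|P0] := eqVneq P1 0.
    apply: (@ER_const _ M1 0) => q /H1 [_ ->]; by rewrite P0 horner0 mul0r inv0E invr0.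
  have [M2 H2] := sg_event _ P0.
  exists (Num.max M1 M2), Q1, P1 => q /maxP [/H1 [n1 ->] /H2 s2].
  rewrite inv0E invf_div; split=> //.
  by rewrite -sgr_eq0 s2 sgr_eq0 lead_coef_eq0.
- move=> a [M1 [P1 [Q1 H1]]].
  have [P0|P0] := eqVneq P1 0.
    apply: (@ER_const _ M1 0) => q /H1 [_ ->]; by rewrite P0 horner0 mul0r sgnE sgr0.
  have Q0 : Q1 != 0.
    have [h _] := H1 (M1 + 1) ltac:(by rewrite ltrDl ltr01).
    by apply/eqP => Q0; move: h; rewrite Q0 horner0 eqxx.
  have [M2 H2] := sg_event _ P0.
  have [M3 H3] := sg_event _ Q0.
  apply: (@ER_const _ (Num.max M1 (Num.max M2 M3))
     (Num.sg (lead_coef P1) * Num.sg (lead_coef Q1))) => q /maxP [/H1 [_ ->] /maxP [/H2 s2 /H3 s3]].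
  by rewrite sgnE sgrM sgrV s2 s3.
Qed.

Lemma floor_int (n : int) (q r : rat) : is_floor q r -> n%:~R <= q -> q < n%:~R + 1 -> r = n%:~R.
Proof.
move=> [z [-> [zq H]]] nq qn.
have h1 := H n nq.
have h2 : z <= n.
  rewrite -ltzD1 -(ltr_int rat) intrD (le_lt_trans zq) //.
suff -> : z = n by [].
by apply/eqP; rewrite eq_le h1 h2.
Qed.

Lemma polyZ (A : {poly rat}) (M : rat) : (forall n : nat, M < n%:R -> A.[n%:R] = 0) -> A = 0.
Proof.
move=> H; apply/eqP; apply/negPn/negP => A0.
have [M2 H2] := sg_event _ A0.
set n := Num.Def.archi_bound `|Num.max M M2|.
have hn : Num.max M M2 < n%:R.
  by apply: (le_lt_trans (ler_norm _)); apply: archi_boundP.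
have [h1 h2] := maxP _ _ _ hn.
have := H2 _ h2; rewrite H // sgr0 => /esym/eqP; rewrite sgr_eq0 lead_coef_eq0.
by rewrite (negbTE A0).
Qed.

Lemma key t M (P Q : {poly rat}) (c : rat) :
  (forall q, is_floor q (eval_ms t q)) ->
  (forall q, M < q -> Q.[q] != 0 /\ eval_ms t q = P.[q] / Q.[q]) ->
  0 <= c -> c < 1 ->
  forall y, P.[y + c] = y * Q.[y + c].
Proof.
move=> Hf H c0 c1 y.
set A := P \Po ('X + c%:P) - 'X * (Q \Po ('X + c%:P)).
have AE z : A.[z] = P.[z + c] - z * Q.[z + c].
  by rewrite /A hornerD hornerN hornerM hornerX !horner_comp hornerD hornerX hornerC.
suff A0 : A = 0 by apply/eqP; rewrite -subr_eq0 -AE A0 horner0.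
apply: (@polyZ _ M) => n Mn.
have hq : M < n%:R + c by apply: (lt_le_trans Mn); rewrite lerDl.
have [Qn E] := H _ hq.
have F := floor_int (Posz n) _ _ (Hf (n%:R + c)) ltac:(by rewrite lerDl) ltac:(by rewrite ltrD2l).
rewrite AE; apply/eqP; rewrite subr_eq0; apply/eqP.
move: Qn E F; set x := n%:R + c => Qn E F.
have -> : (n%:R : rat) = P.[x] / Q.[x] by rewrite -E F.
by rewrite divfK.
Qed.

Theorem corollary5 : ~ exists t : msterm, forall q : rat, is_floor q (eval_ms t q).
Proof.
move=> [t Hf].
have [M [P [Q H]]] := ER_eval t.
set q := M + 1.
have Mq : M < q by rewrite /q ltrDl ltr01.
have [Qq _] := H _ Mq.
have e1 := key _ _ _ _ 0 Hf H (lexx 0) ltr01 q.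
have e2 := key _ _ _ _ 2^-1 Hf H ltac:(by rewrite invr_ge0 ler0n) ltac:(by rewrite invf_lt1 // ltr1n) (q - 2^-1).
rewrite addr0 in e1; rewrite subrK e1 mulrBl in e2.
move/eqP: e2; rewrite -subr_eq0 opprB addrC subrK mulf_eq0 (negbTE Qq) orbF.
by rewrite invr_eq0 pnatr_eq0.
Qed.
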